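(* Let $\mathbf X\in\mathbb R^{n\times T}$, $k\le n$, and for $\mathbf W\in\mathbb R^{k\times n}$, $\mathbf M\in\mathbb R^{k\times k}$, $\mathbf Y\in\mathbb R^{k\times T}$ define $$L_{PSP}(\mathbf W,\mathbf M,\mathbf Y)=\mathrm{Tr}\Big(-\frac4T\mathbf X^\top\mathbf W^\top\mathbf Y+\frac2T\mathbf Y^\top\mathbf M\mathbf Y\Big)+2\mathrm{Tr}(\mathbf W^\top\mathbf W)-\mathrm{Tr}(\mathbf M^\top\mathbf M).$$ Then (a) for every $\mathbf Y$, $\min_{\mathbf W}\max_{\mathbf M}L_{PSP}(\mathbf W,\mathbf M,\mathbf Y)=\frac1{T^2}\|\mathbf X^\top\mathbf X-\mathbf Y^\top\mathbf Y\|_F^2-\frac1{T^2}\|\mathbf X^\top\mathbf X\|_F^2$, attained at $\mathbf W=\frac1T\mathbf Y\mathbf X^\top$, $\mathbf M=\frac1T\mathbf Y\mathbf Y^\top$; and (b) for every $\mathbf W$, $$\max_{\mathbf M}\min_{\mathbf Y}L_{PSP}(\mathbf W,\mathbf M,\mathbf Y)=\min_{\mathbf Y}\max_{\mathbf M}L_{PSP}(\mathbf W,\mathbf M,\mathbf Y)=\mathrm{Tr}\Big(-\frac3{T^{2/3}}(\mathbf W\mathbf X\mathbf X^\top\mathbf W^\top)^{2/3}+2\mathbf W\mathbf W^\top\Big).$$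
   Context: Matrix fractional powers of positive semidefinite matrices are defined via eigendecomposition; $\|\cdot\|_F$ is the Frobenius norm. *)

(* Defs.v *)
From HB Require Import structures.
From mathcomp Require Import all_boot all_order all_algebra.
Set Implicit Arguments. Unset Strict Implicit. Unset Printing Implicit Defensive.
Import Order.TTheory GRing.Theory Num.Theory.
Local Open Scope ring_scope.

Section Defs.
Variable R : rcfType.

Definition fnorm (m p : nat) (A : 'M[R]_(m, p)) : R :=
  Num.sqrt (\sum_(i < m) \sum_(j < p) A i j ^+ 2).

Definition is_pow23 (x y : R) : Prop := 0 <= x /\ 0 <= y /\ y ^+ 3 = x ^+ 2.

Definition is_mxpow23 (n : nat) (A P : 'M[R]_n) : Prop :=
  exists (Q : 'M[R]_n) (d e : 'rV[R]_n),
    [/\ Q^T *m Q = 1%:M,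
        forall i, is_pow23 (d 0 i) (e 0 i),
        A = Q *m diag_mx d *m Q^T &
        P = Q *m diag_mx e *m Q^T].

Definition Lpsp (n k T : nat) (X : 'M[R]_(n, T))
  (W : 'M[R]_(k, n)) (M : 'M[R]_k) (Y : 'M[R]_(k, T)) : R :=
  \tr (- (4 / T%:R) *: (X^T *m W^T *m Y) + (2 / T%:R) *: (Y^T *m M *m Y))
  + 2 * \tr (W^T *m W) - \tr (M^T *m M).

(* min_a max_b f a b = v, attained at (a0, b0):
   max_b f a0 b = f a0 b0 = v, and for every a, sup_b f a b >= v. *)
Definition minmax_at (A B : Type) (f : A -> B -> R) (a0 : A) (b0 : B) (v : R) : Prop :=
  [/\ f a0 b0 = v,
      forall b, f a0 b <= v &
      forall a u, (forall b, f a b <= u) -> v <= u].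

Definition minmax_value (A B : Type) (f : A -> B -> R) (v : R) : Prop :=
  exists a0 b0, minmax_at f a0 b0 v.

(* max_a min_b f a b = v, attained:
   min_b f a0 b = f a0 b0 = v, and for every a, inf_b f a b <= v
   (inf possibly -infinity). *)
Definition maxmin_value (A B : Type) (f : A -> B -> R) (v : R) : Prop :=
  exists a0 b0,
  [/\ f a0 b0 = v,
      forall b, v <= f a0 b &
      forall a u, (forall b, u <= f a b) -> u <= v].

End Defs.

(* Main.v *)
Require Import Defs.
From HB Require Import structures.
From mathcomp Require Import all_boot all_order all_algebra.
From mathcomp Require Import ring lra.
From mathcomp Require complex.
Import Order.TTheory GRing.Theory Num.Theory.
Local Open Scope ring_scope.

Module SpecM.
Import complex.
Lemma real_eig {R : rcfType} (r p : nat) (A' : 'M[R]_r) (K : 'M[R]_(r,p)) (A : 'M[R]_p) :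
  (0 < r)%N -> row_free K -> A^T = A -> A' *m K = K *m A ->
  exists (lam : R) (y : 'rV[R]_r), y != 0 /\ y *m A' = lam *: y.
Proof.
move=> r0 fK sA HK.
pose phi := real_complex R.
have [a Ha] := eigenvalue_closed (map_mx phi A') r0.
have /eigenvalueP [v Hv vnz] := Ha.
pose z := v *m map_mx phi K.
have znz : z != 0 by rewrite mulmx_free_eq0 ?row_free_map.
have zA : z *m map_mx phi A = a *: z.
  by rewrite /z -mulmxA -map_mxM -HK map_mxM mulmxA Hv scalemxAl.
pose cj := (@Num.Def.conjC (R[i])).
have phiR : forall x : R, cj (phi x) = phi x.
  move=> x; apply/CrealP; apply/complex_realP; by exists x.
have cjA : map_mx cj (map_mx phi A) = map_mx phi A.
  by apply/matrixP=> i j; rewrite !mxE phiR.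
pose zc := map_mx cj z.
have zcA : zc *m map_mx phi A = cj a *: zc.
  by rewrite /zc -cjA -map_mxM zA map_mxZ.
have trA : (map_mx phi A)^T = map_mx phi A by apply/matrixP=> i j; rewrite !mxE -[in RHS]sA mxE.
pose N := (z *m zc^T) 0 0.
have e1 : (z *m map_mx phi A *m zc^T) 0 0 = a * N.
  by rewrite zA -scalemxAl mxE.
have e2 : (zc *m map_mx phi A *m z^T) 0 0 = cj a * N.
  rewrite zcA -scalemxAl mxE; congr (_ * _).
  by rewrite /N !mxE; apply: eq_bigr => j _; rewrite !mxE mulrC.
have e3 : (z *m map_mx phi A *m zc^T) 0 0 = (zc *m map_mx phi A *m z^T) 0 0.
  have -> : zc *m map_mx phi A *m z^T = (z *m map_mx phi A *m zc^T)^T.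
    by rewrite !trmx_mul trmxK trA mulmxA.
  by rewrite [RHS]mxE.
have Nnz : N != 0.
  apply: contra znz => /eqP N0; apply/eqP/matrixP => i j.
  rewrite !ord1 mxE.
  move: N0; rewrite /N mxE => /eqP; rewrite psumr_eq0; last first.
    by move=> l _; rewrite !mxE mul_conjC_ge0.
  by move=> /allP /(_ j (mem_index_enum _)); rewrite !mxE mul_conjC_eq0 => /eqP.
have aR : cj a = a.
  by apply: (mulIf Nnz); rewrite -e1 -e2 e3.
have /complex_realP [lam alam] : a \is Num.real by apply/CrealP.
rewrite alam in Ha.
exists lam.
have : eigenvalue A' lam.
  by rewrite eigenvalue_root_char -(fmorph_root phi) map_char_poly -eigenvalue_root_char; exact: Ha.
move=> /eigenvalueP [y Hy ynz]; exists y; split => //.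
Qed.

Lemma ext_step {R : rcfType} (p m : nat) (A : 'M[R]_p) (B : 'M[R]_(m,p)) (d : 'rV[R]_m) :
  A^T = A -> B *m B^T = 1%:M -> B *m A = diag_mx d *m B -> (m < p)%N ->
  exists (lam : R) (x : 'rV[R]_p), [/\ x *m x^T = 1%:M, x *m B^T = 0 & x *m A = lam *: x].
Proof.
move=> sA BB BA mp.
pose K := row_base (kermx B^T).
have rB : \rank B = m.
  apply/eqP; rewrite eqn_leq rank_leq_row /=.
  by rewrite -{1}(mxrank1 R m) -BB mxrankM_maxl.
have r0 : (0 < \rank (kermx B^T))%N by rewrite mxrank_ker mxrank_tr rB subn_gt0.
have KB : K *m B^T = 0 by apply/eqP; rewrite -sub_kermx eq_row_base.
have AB : A *m B^T = B^T *m diag_mx d.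
  by rewrite -{1}sA -trmx_mul BA trmx_mul tr_diag_mx.
have KAK : (K *m A <= K)%MS.
  by rewrite eq_row_base sub_kermx -mulmxA AB mulmxA KB mul0mx.
pose A' := K *m A *m pinvmx K.
have HK : A' *m K = K *m A by apply: mulmxKpV.
have [lam [y [ynz yA]]] := @real_eig R _ _ A' K A r0 (row_base_free _) sA HK.
pose x0 := y *m K.
have x0nz : x0 != 0 by rewrite mulmx_free_eq0 ?row_base_free.
have x0A : x0 *m A = lam *: x0 by rewrite /x0 -mulmxA -HK mulmxA yA scalemxAl.
have x0B : x0 *m B^T = 0 by rewrite /x0 -mulmxA KB mulmx0.
pose N0 := (x0 *m x0^T) 0 0.
have N0E : N0 = \sum_j (x0 0 j ^+ 2).
  by rewrite /N0 mxE; apply: eq_bigr => j _; rewrite !mxE expr2.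
have N0ge : 0 <= N0.
  by rewrite N0E; apply: sumr_ge0 => j _; rewrite sqr_ge0.
have N0nz : N0 != 0.
  apply: contra x0nz; rewrite N0E psumr_eq0; last by move=> j _; rewrite sqr_ge0.
  move=> /allP H; apply/eqP/matrixP => i j; rewrite !ord1 [RHS]mxE.
  by have /implyP/(_ isT) := H j (mem_index_enum _); rewrite sqrf_eq0 => /eqP.
exists lam, ((Num.sqrt N0)^-1 *: x0); split.
- rewrite linearZ /= -scalemxAl -scalemxAr scalerA (mx11_scalar (x0 *m x0^T)) -/N0.
  rewrite scale_scalar_mx -invfM -expr2 sqr_sqrtr // mulVf //.
- by rewrite -scalemxAl x0B scaler0.
- by rewrite -scalemxAl x0A !scalerA mulrC.
Qed.

Lemma spec_ind {R : rcfType} (p : nat) (A : 'M[R]_p) : A^T = A ->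
  forall m, (m <= p)%N -> exists (B : 'M[R]_(m,p)) (d : 'rV[R]_m),
    B *m B^T = 1%:M /\ B *m A = diag_mx d *m B.
Proof.
move=> sA; elim=> [|m IH] mp.
  exists 0, 0; split; first by rewrite [LHS]flatmx0 [RHS]flatmx0.
  by rewrite [LHS]flatmx0 [RHS]flatmx0.
have [B [d [BB BA]]] := IH (ltnW mp).
have [lam [x [xx xB xA]]] := @ext_step R p m A B d sA BB BA mp.
have Bx : B *m x^T = 0 by rewrite -(trmxK B) -trmx_mul xB trmx0.
suff : exists (B : 'M[R]_(1 + m,p)) (d : 'rV[R]_(1 + m)),
    B *m B^T = 1%:M /\ B *m A = diag_mx d *m B by [].
exists (col_mx x B), (row_mx (\row_(i < 1) lam) d); split.
  by rewrite tr_col_mx mul_col_row xx xB Bx BB -scalar_mx_block.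
rewrite mul_col_mx diag_mx_row mul_block_col !mul0mx addr0 add0r xA BA.
congr col_mx; apply/matrixP => i j; rewrite mul_diag_mx !mxE ord1.
by [].
Qed.

Lemma spectral {R : rcfType} (p : nat) (A : 'M[R]_p) : A^T = A ->
  exists (Q : 'M[R]_p) (d : 'rV[R]_p), Q^T *m Q = 1%:M /\ A = Q *m diag_mx d *m Q^T.
Proof.
move=> sA; have [B [d [BB BA]]] := @spec_ind R p A sA p (leqnn p).
exists B^T, d; rewrite trmxK; split => //.
by rewrite -mulmxA -BA mulmxA (mulmx1C BB) mul1mx.
Qed.

End SpecM.

Definition ip {R : rcfType} {m p : nat} (A B : 'M[R]_(m,p)) : R := \tr (A^T *m B).

Lemma ipC {R : rcfType} {m p : nat} (A B : 'M[R]_(m,p)) : ip A B = ip B A.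
Proof. by rewrite /ip -mxtrace_tr trmx_mul trmxK. Qed.

Lemma ipDl {R : rcfType} {m p : nat} (A B D : 'M[R]_(m,p)) : ip (A + B) D = ip A D + ip B D.
Proof. by rewrite /ip linearD /= mulmxDl mxtraceD. Qed.

Lemma ipNl {R : rcfType} {m p : nat} (A D : 'M[R]_(m,p)) : ip (- A) D = - ip A D.
Proof. by rewrite /ip linearN /= mulNmx linearN. Qed.

Lemma ipZl {R : rcfType} {m p : nat} (c : R) (A D : 'M[R]_(m,p)) : ip (c *: A) D = c * ip A D.
Proof. by rewrite /ip linearZ /= -scalemxAl mxtraceZ. Qed.

Lemma ipDr {R : rcfType} {m p : nat} (A B D : 'M[R]_(m,p)) : ip D (A + B) = ip D A + ip D B.
Proof. by rewrite ipC ipDl ![ip _ D]ipC. Qed.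

Lemma ipNr {R : rcfType} {m p : nat} (A D : 'M[R]_(m,p)) : ip D (- A) = - ip D A.
Proof. by rewrite ipC ipNl ipC. Qed.

Lemma ipZr {R : rcfType} {m p : nat} (c : R) (A D : 'M[R]_(m,p)) : ip D (c *: A) = c * ip D A.
Proof. by rewrite ipC ipZl ipC. Qed.

Lemma ip_sub {R : rcfType} {m p : nat} (A B : 'M[R]_(m,p)) :
  ip (A - B) (A - B) = ip A A - 2 * ip A B + ip B B.
Proof. rewrite ipDl !ipDr !ipNl !ipNr opprK (ipC B A); ring. Qed.

Lemma ipE {R : rcfType} {m p : nat} (A : 'M[R]_(m,p)) :
  ip A A = \sum_(i < m) \sum_(j < p) A i j ^+ 2.
Proof.
rewrite /ip /mxtrace exchange_big /=; apply: eq_bigr => j _.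
by rewrite mxE; apply: eq_bigr => i _; rewrite mxE expr2.
Qed.

Lemma ip_ge0 {R : rcfType} {m p : nat} (A : 'M[R]_(m,p)) : 0 <= ip A A.
Proof. by rewrite ipE; apply: sumr_ge0 => i _; apply: sumr_ge0 => j _; rewrite sqr_ge0. Qed.

Lemma fnorm_ip {R : rcfType} {m p : nat} (A : 'M[R]_(m,p)) : fnorm A ^+ 2 = ip A A.
Proof. by rewrite /fnorm sqr_sqrtr -ipE ?ip_ge0. Qed.

Lemma LpspE {R : rcfType} {n k T : nat} (X : 'M[R]_(n,T)) (W : 'M[R]_(k,n)) (M : 'M[R]_k) (Y : 'M[R]_(k,T)) :
  Lpsp X W M Y = - (4 / T%:R) * \tr (X^T *m W^T *m Y) + (2 / T%:R) * \tr (Y^T *m M *m Y)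
     + 2 * ip W W - ip M M.
Proof. by rewrite /Lpsp mxtraceD !mxtraceZ. Qed.

Lemma trXWY {R : rcfType} {n k T : nat} (X : 'M[R]_(n,T)) (W : 'M[R]_(k,n)) (Y : 'M[R]_(k,T)) :
  \tr (X^T *m W^T *m Y) = ip W (Y *m X^T).
Proof. by rewrite /ip -mulmxA mxtrace_mulC -mulmxA. Qed.

Lemma trYMY {R : rcfType} {k T : nat} (M : 'M[R]_k) (Y : 'M[R]_(k,T)) :
  \tr (Y^T *m M *m Y) = ip M (Y *m Y^T).
Proof.
rewrite /ip mxtrace_mulC mulmxA.
rewrite -[RHS]mxtrace_tr !trmx_mul !trmxK mulmxA.
by rewrite mxtrace_mulC mulmxA.
Qed.

Lemma La {R : rcfType} {n k T : nat} (X : 'M[R]_(n,T)) (W : 'M[R]_(k,n)) (M : 'M[R]_k) (Y : 'M[R]_(k,T)) :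
  Lpsp X W M Y = 2 * ip (W - T%:R^-1 *: (Y *m X^T)) (W - T%:R^-1 *: (Y *m X^T))
    - ip (M - T%:R^-1 *: (Y *m Y^T)) (M - T%:R^-1 *: (Y *m Y^T))
    + (T%:R^-1 ^+ 2 * ip (Y *m Y^T) (Y *m Y^T) - 2 * T%:R^-1 ^+ 2 * ip (Y *m X^T) (Y *m X^T)).
Proof.
rewrite LpspE trXWY trYMY !ip_sub !ipZr !ipZl; ring.
Qed.

Lemma va {R : rcfType} {n k T : nat} (X : 'M[R]_(n,T)) (Y : 'M[R]_(k,T)) :
  (T%:R ^+ 2)^-1 * fnorm (X^T *m X - Y^T *m Y) ^+ 2 - (T%:R ^+ 2)^-1 * fnorm (X^T *m X) ^+ 2
  = T%:R^-1 ^+ 2 * ip (Y *m Y^T) (Y *m Y^T) - 2 * T%:R^-1 ^+ 2 * ip (Y *m X^T) (Y *m X^T).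
Proof.
have h3 : ip (X^T *m X) (Y^T *m Y) = ip (Y *m X^T) (Y *m X^T).
  rewrite /ip !trmx_mul !trmxK !mulmxA [RHS]mxtrace_mulC !mulmxA //.
have h4 : ip (Y^T *m Y) (Y^T *m Y) = ip (Y *m Y^T) (Y *m Y^T).
  rewrite /ip !trmx_mul !trmxK !mulmxA [RHS]mxtrace_mulC !mulmxA //.
rewrite !fnorm_ip ip_sub h3 h4 exprVn; ring.
Qed.

Lemma ip00 {R : rcfType} {m p : nat} : ip (0 : 'M[R]_(m,p)) 0 = 0.
Proof. by rewrite /ip mulmx0 mxtrace0. Qed.

Lemma partA {R : rcfType} {n k T : nat} (X : 'M[R]_(n,T)) (Y : 'M[R]_(k,T)) :
  minmax_at (fun (W : 'M[R]_(k, n)) (M : 'M[R]_k) => Lpsp X W M Y)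
       (T%:R^-1 *: (Y *m X^T)) (T%:R^-1 *: (Y *m Y^T))
       ((T%:R ^+ 2)^-1 * fnorm (X^T *m X - Y^T *m Y) ^+ 2
        - (T%:R ^+ 2)^-1 * fnorm (X^T *m X) ^+ 2).
Proof.
rewrite va; split.
- by rewrite La !subrr !ip00 mulr0 subr0 add0r.
- move=> M; rewrite La subrr ip00 mulr0 add0r.
  have := ip_ge0 (M - T%:R^-1 *: (Y *m Y^T)); lra.
- move=> W u Hu; have := Hu (T%:R^-1 *: (Y *m Y^T)); rewrite La subrr ip00.
  have := ip_ge0 (W - T%:R^-1 *: (Y *m X^T)); lra.
Qed.

Lemma saddle_mm {R : rcfType} {A B : Type} (g : A -> B -> R) a0 b0 :
  (forall a, g a b0 <= g a0 b0) -> (forall b, g a0 b0 <= g a0 b) ->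
  maxmin_value g (g a0 b0) /\ minmax_value (fun b a => g a b) (g a0 b0).
Proof.
move=> H1 H2; split.
  exists a0, b0; split => // a u Hu; exact: le_trans (Hu b0) (H1 a).
exists b0, a0; split => // b u Hu; exact: le_trans (H2 b) (Hu a0).
Qed.

Lemma saddle_uniq {R : rcfType} {A B : Type} (g : A -> B -> R) a1 b1 a2 b2 :
  (forall a, g a b1 <= g a1 b1) -> (forall b, g a1 b1 <= g a1 b) ->
  (forall a, g a b2 <= g a2 b2) -> (forall b, g a2 b2 <= g a2 b) ->
  g a1 b1 = g a2 b2.
Proof.
move=> H1 H2 H3 H4; apply/eqP; rewrite eq_le.
by rewrite (le_trans (H2 b2) (H3 a1)) (le_trans (H4 b1) (H1 a2)).
Qed.

Lemma LY {R : rcfType} {n k T : nat} (X : 'M[R]_(n,T)) (W : 'M[R]_(k,n)) (M : 'M[R]_k)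
  (Y0 Z : 'M[R]_(k,T)) : M^T = M -> M *m Y0 = W *m X ->
  Lpsp X W M (Y0 + Z) = Lpsp X W M Y0 + (2 / T%:R) * \tr (Z^T *m M *m Z).
Proof.
move=> sM HMY.
have hY : Y0^T *m M = X^T *m W^T.
  by rewrite -[M in LHS]sM -trmx_mul HMY trmx_mul.
have h1 : \tr (Y0^T *m M *m Z) = \tr (X^T *m W^T *m Z) by rewrite hY.
have h2 : \tr (Z^T *m M *m Y0) = \tr (X^T *m W^T *m Z).
  by rewrite -mulmxA HMY -mxtrace_tr !trmx_mul trmxK.
have tD : (Y0 + Z)^T = Y0^T + Z^T by apply/matrixP => i j; rewrite !mxE.
rewrite !LpspE tD !mulmxDl !mulmxDr !mxtraceD h1 h2; ring.
Qed.

Lemma pow23_sqrt {R : rcfType} (x y : R) : is_pow23 x y ->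
  [/\ 0 <= Num.sqrt y, Num.sqrt y ^+ 2 = y & Num.sqrt y ^+ 3 = x].
Proof.
move=> [x0 [y0 e]]; have s0 := sqrtr_ge0 y.
have s2 : Num.sqrt y ^+ 2 = y by rewrite sqr_sqrtr.
split => //; apply/eqP; rewrite -(@eqrXn2 _ 2) // ?exprn_ge0 //.
by rewrite -exprM mulnC exprM s2 e.
Qed.

Lemma Zfacts {R : rcfType} {k T : nat} (Q : 'M[R]_k) (d : 'rV[R]_k) (C : 'M[R]_(k,T)) :
  Q^T *m Q = 1%:M -> C *m C^T = Q *m diag_mx d *m Q^T ->
  (Q^T *m C) *m (Q^T *m C)^T = diag_mx d /\
  (forall i, d 0 i = \sum_j (Q^T *m C) i j ^+ 2).
Proof.
move=> HQ HC.
have ZZ : (Q^T *m C) *m (Q^T *m C)^T = diag_mx d.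
  rewrite trmx_mul trmxK mulmxA -(mulmxA _ C) HC !mulmxA HQ mul1mx.
  by rewrite -mulmxA HQ mulmx1.
split => // i; have <- : diag_mx d i i = d 0 i by rewrite mxE eqxx mulr1n.
rewrite -ZZ mxE; apply: eq_bigr => j _.
by rewrite !mxE expr2.
Qed.

Lemma Zrow {R : rcfType} {k T : nat} (Z : 'M[R]_(k,T)) (d : 'rV[R]_k) :
  (forall i, d 0 i = \sum_j Z i j ^+ 2) -> forall i j, d 0 i = 0 -> Z i j = 0.
Proof.
move=> dE i j; rewrite dE => /eqP; rewrite psumr_eq0; last by move=> l _; rewrite sqr_ge0.
move=> /allP /(_ j (mem_index_enum _)) /implyP /(_ isT).
by rewrite sqrf_eq0 => /eqP.
Qed.

Lemma build {R : rcfType} {n k T : nat} (X : 'M[R]_(n,T)) (W : 'M[R]_(k,n))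
  (Q : 'M[R]_k) (d e : 'rV[R]_k) (tau : R) :
  (0 < T)%N -> Q^T *m Q = 1%:M -> (forall i, is_pow23 (d 0 i) (e 0 i)) ->
  W *m X *m X^T *m W^T = Q *m diag_mx d *m Q^T -> is_pow23 T%:R tau ->
  exists (M0 : 'M[R]_k) (Y0 : 'M[R]_(k,T)),
   [/\ forall M, Lpsp X W M Y0 <= Lpsp X W M0 Y0,
       forall Y, Lpsp X W M0 Y0 <= Lpsp X W M0 Y &
       Lpsp X W M0 Y0 = \tr (- (3 / tau) *: (Q *m diag_mx e *m Q^T) + 2 *: (W *m W^T))].
Proof.
move=> T0 HQ Hde HA Ht.
have [C Cdef] : {C | C = W *m X} by exists (W *m X).
have HC : C *m C^T = Q *m diag_mx d *m Q^T by rewrite Cdef trmx_mul !mulmxA.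
have QQ : Q *m Q^T = 1%:M := mulmx1C HQ.
have [ZZ dE] := @Zfacts R k T Q d C HQ HC.
have [Z Zdef] : {Z | Z = Q^T *m C} by exists (Q^T *m C).
rewrite -Zdef in ZZ dE.
have Zr := @Zrow R k T Z d dE.
have [t0 t2 t3] := pow23_sqrt _ _ Ht.
pose t := Num.sqrt tau.
have tn0 : t != 0.
  apply/eqP => t00; move: t3; rewrite -/t t00 expr0n /= => /esym/eqP.
  by rewrite pnatr_eq0 => /eqP T00; rewrite T00 in T0.
pose g := \row_i (t / Num.sqrt (e 0 i)).
have gd : forall i, g 0 i * d 0 i = t * e 0 i.
  move=> i; rewrite mxE; move: (pow23_sqrt _ _ (Hde i)).
  move: (Num.sqrt (e 0 i)) => s [s0 s2 s3].
  rewrite -s3 -s2; case: (eqVneq s 0) => [-> | sn0].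
    by rewrite !expr0n /= !mulr0.
  by field.
have g3d : forall i j, g 0 i * (d 0 i * (g 0 i * (g 0 i * Z i j))) = T%:R * Z i j.
  move=> i j; case: (eqVneq (d 0 i) 0) => [di0 | din0].
    by rewrite (Zr i j di0) !mulr0.
  rewrite !mxE; move: (pow23_sqrt _ _ (Hde i)) din0.
  move: (Num.sqrt (e 0 i)) => s [s0 s2 s3] din0.
  have sn0 : s != 0 by apply: contra din0 => /eqP s00; rewrite -s3 s00 expr0n.
  by rewrite -s3 -t3 -/t; field.
have [Zg Zgdef] : {Zg | Zg = diag_mx g *m Z} by exists (diag_mx g *m Z).
have [Y0 Y0def] : {Y0 | Y0 = Q *m Zg} by exists (Q *m Zg).
have K0 : Zg *m Zg^T *m Zg = T%:R *: Z.
  rewrite Zgdef trmx_mul tr_diag_mx !mulmxA -(mulmxA (diag_mx g) Z) ZZ -!mulmxA.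
  by apply/matrixP => a b; move: (g3d a b); rewrite !mul_diag_mx !mxE.
have K1 : Y0 *m Y0^T *m Y0 = T%:R *: C.
  have -> : Y0 *m Y0^T *m Y0 = Q *m (Zg *m Zg^T *m Zg).
    by rewrite Y0def trmx_mul !mulmxA -[Q *m Zg *m Zg^T *m Q^T *m Q]mulmxA HQ mulmx1.
  by rewrite K0 -scalemxAr Zdef mulmxA QQ mul1mx.
have K2 : ip C Y0 = t * \tr (diag_mx e).
  have CQ : C^T *m Q = Z^T by rewrite Zdef trmx_mul trmxK.
  rewrite /ip Y0def mulmxA CQ Zgdef mxtrace_mulC -mulmxA ZZ.
  rewrite mulmx_diag !mxtrace_diag mulr_sumr; apply: eq_bigr => i _.
  by rewrite mxE gd.
have K3 : \tr (Q *m diag_mx e *m Q^T) = \tr (diag_mx e) by rewrite mxtrace_mulC mulmxA HQ mul1mx.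
have Tn0 : T%:R != 0 :> R by rewrite pnatr_eq0 -lt0n.
have [M0 M0def] : {M0 | M0 = T%:R^-1 *: (Y0 *m Y0^T)} by exists (T%:R^-1 *: (Y0 *m Y0^T)).
have MY : M0 *m Y0 = C by rewrite M0def -scalemxAl K1 scalerA mulVf // scale1r.
have sM : M0^T = M0 by rewrite M0def linearZ /= trmx_mul trmxK.
exists M0, Y0; split.
- move=> M; rewrite !La M0def subrr ip00.
  have := ip_ge0 (M - T%:R^-1 *: (Y0 *m Y0^T)); lra.
- move=> Y; have -> : Y = Y0 + (Y - Y0) by rewrite addrC subrK.
  have MY' : M0 *m Y0 = W *m X by rewrite MY Cdef.
  rewrite (LY _ _ _ _ _ sM MY').
  have -> : \tr ((Y - Y0)^T *m M0 *m (Y - Y0)) = T%:R^-1 * ip (Y0^T *m (Y - Y0)) (Y0^T *m (Y - Y0)).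
    by rewrite /ip trmx_mul trmxK M0def -scalemxAr -scalemxAl mxtraceZ !mulmxA.
  rewrite lerDl; apply: mulr_ge0; first by rewrite divr_ge0 ?ler0n.
  by apply: mulr_ge0; [rewrite invr_ge0 ler0n | exact: ip_ge0].
- have v1 : \tr (X^T *m W^T *m Y0) = ip C Y0 by rewrite /ip Cdef trmx_mul.
  have v2 : \tr (Y0^T *m M0 *m Y0) = ip C Y0 by rewrite -mulmxA MY ipC.
  have v3 : ip M0 M0 = T%:R^-1 * ip C Y0.
    by rewrite -v2 /ip sM {1}M0def -scalemxAl mxtraceZ -mulmxA mxtrace_mulC.
  rewrite LpspE v1 v2 v3 mxtraceD !mxtraceZ K3 (mxtrace_mulC W W^T) K2.
  change (\tr (W^T *m W)) with (ip W W).
  by rewrite -t2 -t3 -/t; field.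
Qed.

Lemma cube_root {R : rcfType} (x : R) : 0 <= x -> exists y : R, 0 <= y /\ y ^+ 3 = x.
Proof.
move=> x0.
have h1 : 0 <= x + 1 by lra.
have h2 : ('X^3 - x%:P).[0] <= 0 <= ('X^3 - x%:P).[x + 1].
  rewrite !hornerE /= expr0n /= sub0r oppr_le0 x0 /=.
  rewrite subr_ge0; nra.
have [y /andP [y0 _] ry] := poly_ivt h1 h2.
exists y; split => //; move: ry; rewrite /root !hornerE subr_eq0 => /eqP //.
Qed.

Lemma pow23_ex {R : rcfType} (x : R) : 0 <= x -> exists y, is_pow23 x y.
Proof.
move=> x0; have [c [c0 c3]] := cube_root _ x0.
exists (c ^+ 2); split => //; split; first by rewrite sqr_ge0.
by rewrite -exprM mulnC exprM c3.
Qed.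

Theorem mainTheorem6 (R : rcfType) (n k T : nat) (X : 'M[R]_(n, T)) :
  (0 < T)%N -> (k <= n)%N ->
  (* (a) *)
  (forall Y : 'M[R]_(k, T),
     minmax_at (fun (W : 'M[R]_(k, n)) (M : 'M[R]_k) => Lpsp X W M Y)
       (T%:R^-1 *: (Y *m X^T)) (T%:R^-1 *: (Y *m Y^T))
       ((T%:R ^+ 2)^-1 * fnorm (X^T *m X - Y^T *m Y) ^+ 2
        - (T%:R ^+ 2)^-1 * fnorm (X^T *m X) ^+ 2)) /\
  (* (b) *)
  (forall W : 'M[R]_(k, n),
     exists v : R,
       [/\ maxmin_value (fun (M : 'M[R]_k) (Y : 'M[R]_(k, T)) => Lpsp X W M Y) v,
           minmax_value (fun (Y : 'M[R]_(k, T)) (M : 'M[R]_k) => Lpsp X W M Y) v &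
           forall (P : 'M[R]_k) (tau : R),
             is_mxpow23 (W *m X *m X^T *m W^T) P ->
             is_pow23 (T%:R) tau ->
             v = \tr (- (3 / tau) *: P + 2 *: (W *m W^T))]).
Proof.
move=> T0 kn; split; first by move=> Y; exact: partA.
move=> W.
have sA : (W *m X *m X^T *m W^T)^T = W *m X *m X^T *m W^T.
  by rewrite !trmx_mul !trmxK !mulmxA.
have [Q [d [HQ HAd]]] := SpecM.spectral _ _ sA.
have HC : (W *m X) *m (W *m X)^T = Q *m diag_mx d *m Q^T.
  by rewrite -HAd trmx_mul !mulmxA.
have [_ dE] := @Zfacts R k T Q d (W *m X) HQ HC.
have d0 : forall i, 0 <= d 0 i.
  by move=> i; rewrite dE; apply: sumr_ge0 => j _; rewrite sqr_ge0.
have [ef Hef] := @fin_all_exists _ (fun _ => R) (fun i y => is_pow23 (d 0 i) y)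
  (fun i => pow23_ex _ (d0 i)).
pose e : 'rV[R]_k := \row_i ef i.
have He : forall i, is_pow23 (d 0 i) (e 0 i) by move=> i; rewrite mxE.
have [tau Htau] := @pow23_ex R T%:R (ler0n _ _).
have [M0 [Y0 [S1 S2 _]]] := build X W Q d e tau T0 HQ He HAd Htau.
exists (Lpsp X W M0 Y0).
have [mm1 mm2] := saddle_mm (fun M Y => Lpsp X W M Y) M0 Y0 S1 S2.
split => // P tau' [Q' [d' [e' [HQ' Hde' HA' HP']]]] Htau'.
have [M1 [Y1 [S1' S2' Sv']]] := build X W Q' d' e' tau' T0 HQ' Hde' HA' Htau'.
rewrite HP' -Sv'.
exact: (saddle_uniq (fun M Y => Lpsp X W M Y) M0 Y0 M1 Y1 S1 S2 S1' S2').
Qed.
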